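(* Let $q$ be a prime power, $n\ge1$, and let $f(x)\neq x-1$ be a primitive polynomial of degree $n$ over $\mathbb{F}_q$. Then the polynomial $$F(x)=\frac{f\big(x^{q^n}+x^{q^n-1}\big)}{f(x+1)}$$ of degree $n(q^n-1)$ is irreducible over $\mathbb{F}_q$.
   Context: A primitive polynomial of degree $n$ over $\mathbb{F}_q$ is a monic irreducible polynomial of degree $n$ whose roots generate the multiplicative group $\mathbb{F}_{q^n}^*$. *)

(* Defs.v *)
From HB Require Import structures.
From mathcomp Require Import all_boot all_order all_algebra all_field.
From mathcomp Require Export qfpoly.

(* Main.v *)
Require Import Defs.
From HB Require Import structures.
From mathcomp Require Import all_boot all_order all_algebra all_field qfpoly.
Import GRing.Theory.
Local Open Scope ring_scope.

Lemma card_pchar_nat (F : finFieldType) : [pchar F].-nat #|F|.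
Proof.
have [p pr pF] := finPcharP F.
rewrite (eq_pnat _ (pcharf_eq pF)) (card_pprimeChar pF).
by rewrite pnatX pnat_id ?orbT.
Qed.

Lemma pchar_nat_lalg (F : finFieldType) (A : lalgType F) k :
  [pchar A].-nat (#|F| ^ k)%N.
Proof.
rewrite (eq_pnat _ (pchar_lalg A)) pnatX card_pchar_nat //.
Qed.

Lemma minPoly_root_irr (F : fieldType) (L : fieldExtType F) (f : {poly F}) (b : L) :
  f \is monic -> irreducible_poly f -> root (map_poly (in_alg L) f) b ->
  minPoly 1 b = map_poly (in_alg L) f.
Proof.
move=> fM fI rb.
have [r Dr] := polyOver1P (minPolyOver 1 b).
have : minPoly 1 b %| map_poly (in_alg L) f.
  by apply: minPoly_dvdp => //; apply/polyOver1P; exists f.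
rewrite Dr dvdp_map => rf.
have rM : r \is monic by rewrite -(map_monic (in_alg L)) -Dr monic_minPoly.
have sr : size r != 1%N.
  by rewrite -(size_map_poly (in_alg L)) -Dr size_minPoly.
case: fI => _ /(_ r sr rf) rf'.
suff rfE : r = f by rewrite -rfE.
by apply/eqP; rewrite -eqp_monic.
Qed.

Lemma idt (R : comNzRingType) (w z b : R) : w * (z + 1) = b * z ->
  (w - b + 1) * (z * b) = (z - b + 1) * w.
Proof.
move=> h.
have e1 : (w - b + 1) * z = z - w.
  rewrite mulrDl mulrBl mul1r -h mulrDr mulr1.
  by rewrite opprD addrA subrr add0r addrC.
rewrite mulrA e1 mulrBl (mulrC z b) -h mulrDr mulr1.
rewrite !mulrDl mulNr mul1r (mulrC w z) (mulrC w b).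
by rewrite addrAC.
Qed.

Lemma key (F : finFieldType) (L : fieldExtType F) (n : nat) (f : {poly F}) (z : L) :
  (0 < n)%N -> size f = n.+1 -> primitive_poly f ->
  root (map_poly (in_alg L) f) (z ^+ (#|F| ^ n) + z ^+ (#|F| ^ n - 1)) ->
  z + 1 != z ^+ (#|F| ^ n) + z ^+ (#|F| ^ n - 1) ->
  (n * (#|F| ^ n - 1) <= \dim <<1; z>>)%N.
Proof.
move=> n0 sf pf; set q := #|F|; set Q := (q ^ n)%N; set b := _ + _ => rb zb.
have [[fI fM] fv fmin] := primitive_polyP _ pf.
rewrite (card_primitive_qpoly pf) sf /= -/q -/Q in fv fmin.
have q1 : (1 < q)%N by apply: finNzRing_gt1.
have Q1 : (1 < Q)%N by rewrite -[1%N](expn0 q) ltn_exp2l.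
have mF := minPoly_root_irr _ _ _ _ fM fI rb.
have rootd : forall h, f %| h -> root (map_poly (in_alg L) h) b.
  by move=> h /dvdpP[c ->]; rewrite rmorphM rootM rb orbT.
have bQ1 : b ^+ (Q - 1) = 1.
  have := rootd _ fv; rewrite rmorphB rmorph1 /= map_polyXn rootE !hornerE.
  by rewrite subr_eq0 subn1 => /eqP.
have Qm1 : (Q - 1 != 0)%N by rewrite subn_eq0 -ltnNge.
have b0 : b != 0.
  apply/eqP => b0; move: bQ1; rewrite b0 expr0n (negbTE Qm1) => /eqP.
  by rewrite eq_sym oner_eq0.
have QE : Q = (Q - 1).+1 by rewrite subn1 prednK // ltnW.
have bE : b = z ^+ (Q-1) * (z + 1).
  by rewrite mulrDr mulr1 -exprSr -QE.
have z0 : z != 0.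
  by apply: contra b0 => /eqP zz; rewrite bE zz expr0n (negbTE Qm1) mul0r.
have z10 : z + 1 != 0.
  by apply: contra b0 => /eqP zz; rewrite bE zz mulr0.
have hw : z ^+ Q * (z + 1) = b * z.
  by rewrite bE mulrAC -exprSr -QE.
have bQ : b ^+ Q = b by rewrite QE exprSr bQ1 mul1r.
have frD k : forall x y : L, (x + y) ^+ (q ^ k) = x ^+ (q ^ k) + y ^+ (q ^ k).
  by move=> x y; apply: exprDn_pchar; apply: pchar_nat_lalg.
have frN k : forall x : L, (- x) ^+ (q ^ k) = - x ^+ (q ^ k).
  by move=> x; apply: exprNn_pchar; apply: pchar_nat_lalg.
set v := (z - b + 1) / z.
have vQ : v ^+ Q = v / b.
  rewrite /v expr_div_n /Q frD frD frN expr1n -/Q bQ -mulrA -invfM.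
  apply/eqP; rewrite eqr_div ?mulf_neq0 ?expf_neq0 //; apply/eqP.
  exact: idt.
have vj : forall j, v ^+ (Q ^ j) = v / b ^+ j.
  elim => [|j IH]; first by rewrite expn0 expr1 expr0 invr1 mulr1.
  rewrite expnSr exprM IH expr_div_n vQ -exprM mulnC exprM bQ.
  by rewrite exprS invfM mulrA.
set e := \dim <<1; z>>.
have Fz : z ^+ (q ^ e) = z.
  by apply/eqP; rewrite -[(q ^ e)%N]/((fun (L0 : vectType F) (K0 : {vspace L0}) => (#|F| ^ \dim K0)%N) L <<1; z>>%AS) -Fermat's_little_theorem memv_adjoin.
have bK : b \in <<1; z>>%VS.
  have -> : b = ('X^Q + 'X^(Q-1) : {poly L}).[z] by rewrite !hornerE.
  by apply: mempx_Fadjoin; rewrite rpredD ?rpredX ?polyOverX.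
have Fb : b ^+ (q ^ e) = b.
  apply/eqP; rewrite -[(q ^ e)%N]/((fun (L0 : vectType F) (K0 : {vspace L0}) => (#|F| ^ \dim K0)%N) L <<1; z>>%AS) -Fermat's_little_theorem.
  exact: bK.
have dimb : \dim <<1; b>> = n.
  rewrite dim_Fadjoin dimv1 muln1.
  have := size_minPoly 1 b; rewrite mF size_map_poly sf.
  by move=> [].
have ne : (n %| e)%N.
  rewrite -dimb; apply: field_dimS; rewrite sub_adjoin1v; exact: bK.
set m := (e %/ n)%N.
have eE : e = (m * n)%N by rewrite divnK.
have vN : v ^+ (Q ^ m) = v.
  rewrite /Q -expnM mulnC -eE /v expr_div_n frD frD frN expr1n Fz Fb.
  by [].
have v0 : v != 0.
  rewrite /v mulf_neq0 ?invr_neq0 //.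
  by rewrite addrAC subr_eq0.
have bm : b ^+ m = 1.
  have := vj m; rewrite vN => h.
  have : v * (b ^+ m)^-1 = v * 1 by rewrite mulr1 -h.
  by move/(mulfI v0)/eqP; rewrite invr_eq1 => /eqP.
have m0 : (0 < m)%N.
  by rewrite lt0n; apply: contraTneq (adim_gt0 <<1; z>>%AS) => m0; rewrite -/e eE m0.
have : (Q - 1 <= m)%N.
  rewrite leqNgt; apply/negP => mlt.
  have := fmin m; rewrite m0 -subn1 mlt => /(_ isT) /negP; apply.
  rewrite -(dvdp_map (in_alg L)) -mF; apply: minPoly_dvdp.
    by apply/polyOver1P; exists ('X^m - 1).
  by rewrite rmorphB rmorph1 /= map_polyXn rootE !hornerE bm subrr.
by move=> h; rewrite eE mulnC leq_mul2r h orbT.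
Qed.

Lemma comp_dvd (R : idomainType) (p a b : {poly R}) : (a - b) %| ((p \Po a) - (p \Po b)).
Proof.
elim/poly_ind: p => [|p c IH]; first by rewrite !comp_poly0 subrr dvdp0.
rewrite !comp_polyD !comp_polyM !comp_polyX !comp_polyC.
have -> : (p \Po a) * a + c%:P - ((p \Po b) * b + c%:P)
    = ((p \Po a) - (p \Po b)) * a + (p \Po b) * (a - b).
  rewrite mulrBl mulrBr addrA subrK.
  by rewrite opprD addrACA subrr addr0.
by apply: dvdp_add; [apply: dvdp_mulr | apply: dvdp_mull].
Qed.

Lemma root_map_dvd {F : fieldType} {L : fieldExtType F} {p h : {poly F}} {x : L} :
  p %| h -> root (map_poly (in_alg L) p) x -> root (map_poly (in_alg L) h) x.
Proof. by move=> /dvdpP[c ->] rp; rewrite rmorphM rootM rp orbT. Qed.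

Theorem mainTheorem12 (F : finFieldType) (n : nat) (f : {poly F}) :
  (0 < n)%N ->
  size f = n.+1 ->
  primitive_poly f ->
  f != 'X - 1 ->
  let q := #|F| in
  let G := f \Po ('X^(q ^ n) + 'X^(q ^ n - 1)) in
  let H := f \Po ('X + 1) in
  [/\ H %| G, size (G %/ H) = (n * (q ^ n - 1)).+1 & irreducible_poly (G %/ H)].
Proof.
move=> n0 sf pf fX1 /=.
set Q := (#|F| ^ n)%N.
have [[fI fM] fv fmin] := primitive_polyP _ pf.
rewrite (card_primitive_qpoly pf) sf /= -/Q in fv fmin.
have q1 : (1 < #|F|)%N by apply: finNzRing_gt1.
have Q1 : (1 < Q)%N by rewrite -[1%N](expn0 #|F|) ltn_exp2l.
have Qm1 : (Q - 1 != 0)%N by rewrite subn_eq0 -ltnNge.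
have QE : Q = (Q - 1).+1 by rewrite subn1 prednK // ltnW.
have f1 : ~~ root f 1.
  apply/negP => /factor_theorem [c fE].
  have hd : ('X - 1%:P) %| f by rewrite fE dvdp_mull.
  case: fI => _ /(_ ('X - 1%:P)); rewrite size_XsubC => /(_ isT hd).
  rewrite eqp_monic ?monicXsubC // polyC1 => /eqP h.
  by move: fX1; rewrite -h eqxx.
have hXQ : f %| 'X^Q - 'X.
  have -> : 'X^Q - 'X = ('X^(Q.-1) - 1) * ('X : {poly F}).
    by rewrite mulrBl mul1r -exprSr -subn1 -QE.
  exact: dvdp_mulr.
have HXQ : f \Po ('X + 1) %| 'X^Q - 'X.
  have := dvdp_comp_poly ('X + 1) hXQ.
  rewrite comp_polyB comp_Xn_poly comp_polyX.
  rewrite exprDn_pchar ?pchar_nat_lalg // expr1n.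
  by rewrite opprD addrACA subrr addr0.
have Hcop : coprimep (f \Po ('X + 1)) 'X.
  rewrite -['X]subr0 -polyC0 coprimep_XsubC rootE horner_comp !hornerE.
  by rewrite oppr0 add0r.
have HXQ1 : f \Po ('X + 1) %| 'X^(Q - 1) - 1.
  rewrite -(Gauss_dvdpr _ Hcop) mulrBr mulr1 -exprS -QE; exact: HXQ.
have HG : f \Po ('X + 1) %| f \Po ('X^Q + 'X^(Q - 1)).
  have h1 : f \Po ('X + 1) %| ('X^Q + 'X^(Q - 1)) - ('X + 1).
    have -> : ('X^Q + 'X^(Q - 1)) - ('X + 1) = ('X^Q - 'X) + ('X^(Q - 1) - 1) :> {poly F}.
      by rewrite opprD addrACA.
    by rewrite dvdp_add.
  have h2 := dvdp_trans h1 (comp_dvd _ f _ _).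
  by have := dvdp_add h2 (dvdpp (f \Po ('X + 1))); rewrite subrK.
have sg : size ('X^Q + 'X^(Q - 1) : {poly F}) = Q.+1.
  by rewrite size_polyDl !size_polyXn // -QE.
have hnQ : (0 < n * Q)%N by rewrite muln_gt0 n0 (ltnW Q1).
have sG : size (f \Po ('X^Q + 'X^(Q - 1))) = (n * Q).+1.
  have := size_comp_poly f ('X^Q + 'X^(Q - 1)); rewrite sf sg /= => h.
  by move: hnQ; rewrite -h; case: (size _).
have sH : size (f \Po ('X + 1)) = n.+1.
  have := size_comp_poly f ('X + 1); rewrite sf size_XaddC /= muln1 => h.
  by move: n0; rewrite -h; case: (size _).
have H0 : f \Po ('X + 1) != 0 by rewrite -size_poly_gt0 sH.
have sP : size ((f \Po ('X^Q + 'X^(Q - 1))) %/ (f \Po ('X + 1))) = (n * (Q - 1)).+1.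
  rewrite size_divp // sG sH /= mulnBr muln1 subSn //.
  by rewrite leq_pmulr // ltnW.
have P0 : (f \Po ('X^Q + 'X^(Q - 1))) %/ (f \Po ('X + 1)) != 0.
  by rewrite -size_poly_gt0 sP.
split => //.
split; first by rewrite sP ltnS muln_gt0 n0 subn_gt0 Q1.
move=> s s1 sP'.
have s0 : s != 0 by apply: contraTneq sP' => ->; rewrite dvd0p.
have [L [rs Ds _]] := FinSplittingFieldFor s0.
case: rs Ds => [|z rs] Ds.
  rewrite big_nil in Ds; move: (eqp_size Ds); rewrite size_poly1 size_map_poly.
  by move=> h; rewrite h eqxx in s1.
have rsz : root (map_poly (in_alg L) s) z.
  by rewrite (eqp_root Ds) big_cons rootM root_XsubC eqxx.
have rPz := root_map_dvd sP' rsz.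
have rGz : root (map_poly (in_alg L) (f \Po ('X^Q + 'X^(Q - 1)))) z.
  apply: root_map_dvd rPz; rewrite -{2}(divpK HG); exact: dvdp_mulr.
set b := z ^+ Q + z ^+ (Q - 1).
have gz : (map_poly (in_alg L) ('X^Q + 'X^(Q - 1))).[z] = b.
  by rewrite rmorphD /= !map_polyXn !hornerE.
have rb : root (map_poly (in_alg L) f) b.
  by move: rGz; rewrite map_comp_poly rootE horner_comp gz.
have mF := minPoly_root_irr _ _ _ _ fM fI rb.
have zb : z + 1 != b.
  apply/negP => /eqP zb.
  have z0 : z != 0.
    apply/eqP => z0; move: rb; rewrite -zb z0 add0r -(rmorph1 (in_alg L)).
    by rewrite rootE horner_map fmorph_eq0 -rootE (negbTE f1).
  have rHz : root (map_poly (in_alg L) (f \Po ('X + 1))) z.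
    rewrite map_comp_poly rootE horner_comp rmorphD /= map_polyX rmorph1 !hornerE zb.
    exact: rb.
  have : root (map_poly (in_alg L) (f \Po ('X^Q + 'X^(Q - 1))))^`() z.
    rewrite -(divpK HG) rmorphM derivM rootE hornerD !hornerM.
    by rewrite (rootP rPz) (rootP rHz) mulr0 mul0r addr0.
  rewrite map_comp_poly deriv_comp rootE hornerM horner_comp gz mulf_eq0.
  have sepb : separable_element 1 b.
    have /and3P[_ sep _] := finField_galois (subvf (1%AS : {subfield L})).
    exact: (separableP sep b (memvf b)).
  have := separable_root_der 1 b; rewrite sepb mF /= => nr.
  case/orP; first by move=> h1; move/negP: nr; apply; apply/eqP; exact: (eqP h1).
  apply/negP.
  have QR0 : (Q%:R : L) = 0.
    apply/eqP; apply/negPn; rewrite natf_neq0_pchar; apply/negP => h.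
    have Qn := pchar_nat_lalg F L n.
    have := pnat_1 Qn h; rewrite -/Q => Qe.
    by move: Q1; rewrite Qe.
  have -> : map_poly (in_alg L) ('X^Q + 'X^(Q - 1)) = 'X^Q + 'X^(Q - 1).
    by rewrite rmorphD /= !map_polyXn.
  rewrite derivD !derivXn hornerD !hornerMn.
  rewrite (hornerXn z (Q.-1)) (hornerXn z ((Q - 1).-1)).
  rewrite -(mulr_natr (z ^+ Q.-1)) -(mulr_natr (z ^+ (Q - 1).-1)) QR0 mulr0 add0r.
  rewrite (natrB L (ltnW Q1)) QR0 sub0r mulrN1.
  by rewrite oppr_eq0 expf_eq0 (negbTE z0) andbF.
have kz := key _ L n f z n0 sf pf rb zb.
have [r Dr] := polyOver1P (minPolyOver 1 z).
have rsd : r %| s.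
  rewrite -(dvdp_map (in_alg L)) -Dr; apply: minPoly_dvdp => //.
  by apply/polyOver1P; exists s.
have sr : size r = (\dim <<1; z>>).+1.
  by rewrite -(size_map_poly (in_alg L)) -Dr size_minPoly dim_Fadjoin dimv1 muln1.
rewrite -dvdp_size_eqp // eqn_leq dvdp_leq //= sP.
apply: leq_trans (dvdp_leq s0 rsd); by rewrite sr ltnS.
Qed.
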